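(* Let $(\Omega,\mathscr A)$ be a measurable space, $\mathscr C\subseteq\mathscr A$ a concept class, and $I$ an ideal of subsets of $\Omega$. Let $S_I$ be the set of all ultrafilters on $\Omega$ containing no element of $I$, and regard each $C\in\mathscr C$ as the $\{0,1\}$-valued function $\xi\mapsto[C\in\xi]$ on $S_I$. For each $n\in\mathbb N$ the following are equivalent: (1) the VC dimension of $\mathscr C$ as a class of functions on $S_I$ is at least $n$; (2) there exist sets $A_1,\dots,A_n\subseteq\Omega$, none belonging to $I$, such that for every $J\subseteq\{1,\dots,n\}$ there is $C\in\mathscr C$ with $A_i\subseteq C$ for all $i\in J$ and $A_i\cap C=\emptyset$ for all $i\notin J$. Moreover, in (2) the sets $A_i$ can be chosen in $\mathscr A$.
   Context: An ideal of subsets of $\Omega$ is a family closed under finite unions and under taking subsets. An ultrafilter on $\Omega$ is a family $\xi$ of nonempty subsets closed under finite intersections such that for each $A\subseteq\Omega$ either $A\in\xi$ or $\Omega\setminus A\in\xi$. ($S_I$ is the Stone space of the quotient Boolean algebra $2^\Omega/I$.) *)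

(* Defs.v *)
From Stdlib Require Import Arith Classical FunctionalExtensionality PropExtensionality.

Set Implicit Arguments.

Definition subset {Omega : Type} (A B : Omega -> Prop) : Prop :=
  forall x, A x -> B x.

Definition setI {Omega : Type} (A B : Omega -> Prop) : Omega -> Prop :=
  fun x => A x /\ B x.

Definition setU {Omega : Type} (A B : Omega -> Prop) : Omega -> Prop :=
  fun x => A x \/ B x.

Definition setC {Omega : Type} (A : Omega -> Prop) : Omega -> Prop :=
  fun x => ~ A x.

Definition disjoint {Omega : Type} (A B : Omega -> Prop) : Prop :=
  forall x, A x -> B x -> False.

Definition sigma_algebra {Omega : Type} (SA : (Omega -> Prop) -> Prop) : Prop :=
  SA (fun _ => True) /\
  (forall A, SA A -> SA (setC A)) /\
  (forall F : nat -> Omega -> Prop, (forall k, SA (F k)) ->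
     SA (fun x => exists k, F k x)).

Definition ideal {Omega : Type} (I : (Omega -> Prop) -> Prop) : Prop :=
  I (fun _ => False) /\
  (forall A B, I A -> I B -> I (setU A B)) /\
  (forall A B, subset B A -> I A -> I B).

Definition ultrafilter {Omega : Type} (xi : (Omega -> Prop) -> Prop) : Prop :=
  (forall A, xi A -> exists x, A x) /\
  (forall A B, xi A -> xi B -> xi (setI A B)) /\
  (forall A, xi A \/ xi (setC A)).

Definition in_S_I {Omega : Type} (I : (Omega -> Prop) -> Prop)
  (xi : (Omega -> Prop) -> Prop) : Prop :=
  ultrafilter xi /\ (forall A, I A -> ~ xi A).

(* VC dimension of the class C (viewed as functions xi |-> [C \in xi] on S_I)
   is at least n: some n distinct points of S_I are shattered. *)
Definition VC_dim_SI_ge {Omega : Type} (I : (Omega -> Prop) -> Prop)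
  (C : (Omega -> Prop) -> Prop) (n : nat) : Prop :=
  exists xi : nat -> (Omega -> Prop) -> Prop,
    (forall i, i < n -> in_S_I I (xi i)) /\
    (forall i j, i < n -> j < n -> xi i = xi j -> i = j) /\
    (forall J : nat -> Prop, exists c, C c /\
       forall i, i < n -> (xi i c <-> J i)).

(* condition (2), with the A_i additionally required to satisfy P *)
Definition cond2 {Omega : Type} (P : (Omega -> Prop) -> Prop)
  (I : (Omega -> Prop) -> Prop) (C : (Omega -> Prop) -> Prop) (n : nat) : Prop :=
  exists A : nat -> Omega -> Prop,
    (forall i, i < n -> P (A i) /\ ~ I (A i)) /\
    (forall J : nat -> Prop, exists c, C c /\
       (forall i, i < n -> J i -> subset (A i) c) /\
       (forall i, i < n -> ~ J i -> disjoint (A i) c)).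

(* Main.v *)
Require Import Defs.
From Stdlib Require Import Arith List Classical ClassicalDescription ClassicalEpsilon FunctionalExtensionality PropExtensionality.
From mathcomp Require boolp classical_sets.
Import ListNotations.
Set Bullet Behavior "Strict Subproofs".

Section UF.
Variable Omega : Type.
Variable I : (Omega -> Prop) -> Prop.
Hypothesis hI : ideal I.
Variable A : Omega -> Prop.
Hypothesis hA : ~ I A.

Definition good (G : (Omega -> Prop) -> Prop) : Prop :=
  G A /\ (forall D E, G D -> G E -> G (setI D E)) /\
  (forall D E, G D -> subset D E -> G E) /\ (forall D, G D -> ~ I D).

Lemma good_base : good (fun D => subset A D).
Proof.
destruct hI as [h0 [hU hS]].
split; [intros x; auto|split; [|split]].
- intros D E HD HE x Hx; split; auto.
- intros D E HD HE x Hx; auto.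
- intros D HD HID; apply hA; exact (hS _ _ HD HID).
Qed.

Definition GT := { G | good G }.

Lemma ultra_exists : exists xi, in_S_I I xi /\ xi A /\
  (forall D E, xi D -> subset D E -> xi E).
Proof.
destruct hI as [h0 [hU hS]].
pose (R := fun (s t : GT) => boolp.asbool (forall D, proj1_sig s D -> proj1_sig t D)).
destruct (@classical_sets.ZL_preorder GT (exist _ _ good_base) R) as [M HM].
- intros t; apply boolp.asboolT; auto.
- intros r s t H1 H2; apply boolp.asboolT; intros D HD.
  apply (boolp.asboolW H2), (boolp.asboolW H1), HD.
- intros Ch Htot.
  destruct (classic (exists s, Ch s)) as [[s0 Hs0]|Hno].
  + assert (Hg : good (fun D => exists s, Ch s /\ proj1_sig s D)).
    { split; [|split; [|split]].
      - exists s0; split; auto. destruct (proj2_sig s0) as [? _]; auto.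
      - intros D E [s [Hs HD]] [t [Ht HE]].
        destruct (Htot s t Hs Ht) as [Hst|Hts].
        + exists t; split; auto. destruct (proj2_sig t) as [_ [Hi _]].
          apply Hi; auto. apply (boolp.asboolW Hst); auto.
        + exists s; split; auto. destruct (proj2_sig s) as [_ [Hi _]].
          apply Hi; auto. apply (boolp.asboolW Hts); auto.
      - intros D E [s [Hs HD]] Hsub; exists s; split; auto.
        destruct (proj2_sig s) as [_ [_ [Hu _]]]; eauto.
      - intros D [s [Hs HD]]. destruct (proj2_sig s) as [_ [_ [_ Hn]]]; eauto. }
    exists (exist _ _ Hg); intros s Hs; apply boolp.asboolT; simpl; intros D HD; eauto.
  + exists (exist _ _ good_base); intros s Hs; exfalso; eauto.
- destruct M as [G [GA [Gi [Gu Gn]]]]; simpl in *.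
  assert (Key : forall B, (exists E, G E /\ I (setI E B)) \/ G B).
  { intros B. destruct (classic (exists E, G E /\ I (setI E B))) as [H|H]; [left; auto|right].
    set (GB := fun D => exists E, G E /\ subset (setI E B) D).
    assert (HgB : good GB).
    { split; [|split; [|split]].
      - exists A; split; auto. intros x [? ?]; auto.
      - intros D E [D' [HD' sD]] [E' [HE' sE]]. exists (setI D' E'); split; auto.
        intros x [[? ?] ?]; split; [apply sD|apply sE]; split; auto.
      - intros D E [D' [HD' sD]] sDE; exists D'; split; auto. intros x Hx; auto.
      - intros D [E [HE sE]] HID. apply H; exists E; split; auto. eapply hS; eauto. }
    specialize (HM (exist _ _ HgB)).
    assert (Hle : is_true (R (exist good G (conj GA (conj Gi (conj Gu Gn)))) (exist _ _ HgB))).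
    { apply boolp.asboolT; simpl; intros D HD; exists D; split; auto. intros x [? ?]; auto. }
    specialize (boolp.asboolW (HM Hle)); simpl; intros Hback.
    apply Hback. exists A; split; auto. intros x [? ?]; auto. }
  exists G; split; [split; [split; [|split]|]|split]; auto.
  + intros D HD. destruct (classic (exists x, D x)) as [?|Hn]; auto.
    exfalso; apply (Gn D HD). apply (hS (fun _ => False)); auto.
    intros x Hx; apply Hn; eauto.
  + intros B. destruct (Key B) as [[E [HE HIE]]|?]; auto.
    destruct (Key (setC B)) as [[E' [HE' HIE']]|?]; auto.
    exfalso. apply (Gn (setI E E')); auto.
    apply (hS (setU (setI E B) (setI E' (setC B)))); auto.
    intros x [? ?]. destruct (classic (B x)); [left|right]; split; auto.
+ intros D HD HG; exact (Gn D HG HD).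
Qed.
End UF.
Section Gen.
Variable Omega : Type.

Lemma uf_up (xi : (Omega -> Prop) -> Prop) : ultrafilter xi ->
  forall D E, xi D -> subset D E -> xi E.
Proof.
intros [hn [hi hd]] D E HD HDE.
destruct (hd E) as [?|HC]; auto.
destruct (hn _ (hi _ _ HD HC)) as [x [Hx1 Hx2]]. exfalso; exact (Hx2 (HDE x Hx1)).
Qed.

Lemma uf_full (xi : (Omega -> Prop) -> Prop) : ultrafilter xi -> xi (fun _ => True).
Proof.
intros [hn [hi hd]]. destruct (hd (fun _ => True)) as [?|HC]; auto.
destruct (hn _ HC) as [x Hx]. exfalso; apply Hx; auto.
Qed.

Lemma SA_ext (SA : (Omega -> Prop) -> Prop) A B : SA A -> (forall x, A x <-> B x) -> SA B.
Proof.
intros H E. replace B with A; auto.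
apply functional_extensionality; intros x; apply propositional_extensionality; auto.
Qed.

Lemma SA_inter (SA : (Omega -> Prop) -> Prop) : sigma_algebra SA ->
  forall A B, SA A -> SA B -> SA (setI A B).
Proof.
intros [hT [hC hU]] A B HA HB.
pose (F := fun k : nat => match k with 0 => setC A | _ => setC B end).
assert (H : SA (setC (fun x => exists k, F k x))).
{ apply hC, hU. intros [|k]; simpl; apply hC; auto. }
apply (@SA_ext SA _ _ H). intros x; unfold setC, setI; split.
- intros Hn. split; apply NNPP; intros Hc; apply Hn; [exists 0|exists 1]; simpl; auto.
- intros [Ha Hb] [[|k] Hk]; simpl in Hk; auto.
Qed.

Lemma list_inter (P : ((Omega -> Prop) -> Prop)) {L : Type} (l : list L)
  (F : L -> Omega -> Prop) :
  P (fun _ => True) -> (forall A B, P A -> P B -> P (setI A B)) ->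
  (forall A B, P A -> (forall x, A x <-> B x) -> P B) ->
  (forall a, In a l -> P (F a)) ->
  P (fun x => forall a, In a l -> F a x).
Proof.
intros hT hI hE. induction l as [|a l IH]; intros HF.
- apply (hE _ _ hT). intros x; split; auto. intros _ a [].
- apply (hE (setI (F a) (fun x => forall a, In a l -> F a x))).
  + apply hI; auto. apply HF; simpl; auto. apply IH; intros; apply HF; simpl; auto.
  + intros x; unfold setI; split.
    * intros [H1 H2] b [<-|Hb]; auto.
    * intros H; split; [apply H; simpl; auto|intros; apply H; simpl; auto].
Qed.
End Gen.

Fixpoint allJ (n : nat) : list (list bool) :=
  match n with
  | 0 => [ [] ]
  | S n => flat_map (fun l => [true :: l; false :: l]) (allJ n)
  end.

Lemma allJ_in n l : length l = n -> In l (allJ n).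
Proof.
revert l; induction n as [|n IH]; intros [|b l] H; simpl in *; try discriminate; auto.
apply in_flat_map. exists l; split; [apply IH; auto|destruct b; simpl; auto].
Qed.

Lemma mkl (J : nat -> Prop) n : exists l, length l = n /\
  forall i, i < n -> (nth i l false = true <-> J i).
Proof.
set (f := fun i => if excluded_middle_informative (J i) then true else false).
exists (map f (seq 0 n)).
split; [rewrite length_map, length_seq; auto|].
intros i Hi. rewrite nth_indep with (d' := f 0)
  by (rewrite length_map, length_seq; auto).
rewrite map_nth, seq_nth by auto. simpl. unfold f.
destruct (excluded_middle_informative (J i)); split; intros; auto; try discriminate; contradiction.
Qed.

Lemma one_to_two (Omega : Type) (SA : (Omega -> Prop) -> Prop)
  (C : (Omega -> Prop) -> Prop) (I : (Omega -> Prop) -> Prop)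
  (hSA : sigma_algebra SA) (hC : forall c, C c -> SA c) (n : nat) :
  VC_dim_SI_ge I C n -> cond2 SA I C n.
Proof.
intros [xi [Hxi [Hinj Hsh]]].
pose (cf := fun J => proj1_sig (constructive_indefinite_description _ (Hsh J))).
assert (Hcf : forall J, C (cf J) /\ forall i, i < n -> (xi i (cf J) <-> J i)).
{ intros J; exact (proj2_sig (constructive_indefinite_description _ (Hsh J))). }
pose (cl := fun l : list bool => cf (fun k => nth k l false = true)).
pose (Fi := fun i l => fun x : Omega => if nth i l false then cl l x else ~ cl l x).
exists (fun i x => forall l, In l (allJ n) -> Fi i l x).
split.
- intros i Hi. split.
  + apply (@list_inter Omega (SA)).
    * destruct hSA as [? _]; auto.
    * apply SA_inter; auto.
    * intros; eapply SA_ext; eauto.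
    * intros l _. unfold Fi. destruct (nth i l false).
      -- apply hC, Hcf.
      -- destruct hSA as [_ [hCo _]]. apply (hCo (cl l)), hC, Hcf.
  + intros HI. destruct (Hxi i Hi) as [Hu Hn]. apply (Hn _ HI).
    apply (@list_inter Omega (xi i)).
    * apply (@uf_full _ _ Hu).
    * destruct Hu as [_ [? _]]; auto.
    * intros A B HA HAB. apply (@uf_up _ _ Hu A B HA). intros x; apply HAB.
    * intros l _. unfold Fi. destruct (Hcf (fun k => nth k l false = true)) as [_ Hs].
      specialize (Hs i Hi). destruct (nth i l false) eqn:E.
      -- apply Hs; auto.
      -- destruct Hu as [_ [_ Hd]]. destruct (Hd (cl l)) as [Hc|Hc]; auto.
         exfalso. apply Hs in Hc. discriminate.
- intros J. destruct (mkl J n) as [l [Hl Hnth]].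
  exists (cl l). split; [apply Hcf|]. split.
  + intros i Hi HJ x Hx. specialize (Hx l (allJ_in _ _ Hl)). unfold Fi in Hx.
    apply Hnth in HJ; auto. rewrite HJ in Hx; auto.
  + intros i Hi HJ x Hx Hc. specialize (Hx l (allJ_in _ _ Hl)). unfold Fi in Hx.
    destruct (nth i l false) eqn:E; auto.
    apply HJ, Hnth; auto.
Qed.

Lemma two_to_one (Omega : Type) (P : (Omega -> Prop) -> Prop)
  (C : (Omega -> Prop) -> Prop) (I : (Omega -> Prop) -> Prop)
  (hI : ideal I) (n : nat) :
  cond2 P I C n -> VC_dim_SI_ge I C n.
Proof.
intros [A [HA Hsh]].
assert (Hex : forall i, exists xi, i < n -> in_S_I I xi /\ xi (A i) /\
  (forall D E, xi D -> subset D E -> xi E)).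
{ intros i. destruct (lt_dec i n) as [Hi|Hi].
  - destruct (@ultra_exists Omega I hI (A i)) as [xi Hxi]; [apply HA; auto|].
    exists xi; auto.
  - exists (fun _ => False); intros; contradiction. }
pose (xf := fun i => proj1_sig (constructive_indefinite_description _ (Hex i))).
assert (Hxf : forall i, i < n -> in_S_I I (xf i) /\ xf i (A i) /\
  (forall D E, xf i D -> subset D E -> xf i E)).
{ intros i; exact (proj2_sig (constructive_indefinite_description _ (Hex i))). }
assert (Hnot : forall i c, i < n -> disjoint (A i) c -> ~ xf i c).
{ intros i c Hi Hd Hc. destruct (Hxf i Hi) as [[[Hn [Hint _]] _] [HAi Hup]].
  assert (Hcc : xf i (setC c)) by (apply (Hup _ _ HAi); intros x Hx Hx'; exact (Hd x Hx Hx')).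
  destruct (Hn _ (Hint _ _ Hc Hcc)) as [x [H1 H2]]; auto. }
exists xf. split; [|split].
- intros i Hi; apply Hxf; auto.
- intros i j Hi Hj Heq. destruct (classic (i = j)) as [?|Hne]; auto.
  destruct (Hsh (fun k => k = i)) as [c [_ [H1 H2]]].
  exfalso. apply (Hnot j c Hj (H2 j Hj (fun e => Hne (eq_sym e)))).
  rewrite <- Heq. destruct (Hxf i Hi) as [_ [HAi Hup]]. apply (Hup _ _ HAi), H1; auto.
- intros J. destruct (Hsh J) as [c [Hc [H1 H2]]]. exists c; split; auto.
  intros i Hi. split.
  + intros Hx. apply NNPP; intros HJ. exact (Hnot i c Hi (H2 i Hi HJ) Hx).
  + intros HJ. destruct (Hxf i Hi) as [_ [HAi Hup]]. apply (Hup _ _ HAi), H1; auto.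
Qed.

Theorem mainTheorem8 (Omega : Type) (SA : (Omega -> Prop) -> Prop)
  (C : (Omega -> Prop) -> Prop) (I : (Omega -> Prop) -> Prop)
  (hSA : sigma_algebra SA) (hC : forall c, C c -> SA c) (hI : ideal I)
  (n : nat) :
  (VC_dim_SI_ge I C n <-> cond2 (fun _ => True) I C n) /\
  (VC_dim_SI_ge I C n <-> cond2 SA I C n).
Proof.
assert (H12 : VC_dim_SI_ge I C n -> cond2 SA I C n) by (apply one_to_two; auto).
split; split; intros H.
- destruct (H12 H) as [A [HA HB]]. exists A; split; auto.
  intros i Hi; split; auto; apply HA; auto.
- eapply two_to_one; eauto.
- auto.
- eapply two_to_one; eauto.
Qed.
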